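(* Let $p\ge0$ be an integer and $0<x<2\pi$. Then $$\sum_{k=1}^\infty\frac{\cos(kx)}{(2k-1)(2k)^p(2k+1)}=\begin{cases}\dfrac12-\dfrac{\pi}{4}\sin\dfrac x2-\displaystyle\sum_{j=1}^{p/2}\frac{\mathrm{Gl}_{2j}(x)}{2^{2j}}, & p\text{ even},\\[8pt] -\dfrac12-\dfrac12\cos\dfrac x2\,\ln\Big(\tan\dfrac x4\Big)+\dfrac12\ln\Big(2\sin\dfrac x2\Big)-\displaystyle\sum_{j=1}^{(p-1)/2}\frac{\mathrm{Cl}_{2j+1}(x)}{2^{2j+1}}, & p\text{ odd},\end{cases}$$ and $$\sum_{k=1}^\infty\frac{\sin(kx)}{(2k-1)(2k)^p(2k+1)}=\begin{cases}-\dfrac12\sin\dfrac x2\,\ln\Big(\tan\dfrac x4\Big)-\displaystyle\sum_{j=1}^{p/2}\frac{\mathrm{Cl}_{2j}(x)}{2^{2j}}, & p\text{ even},\\[8pt] \dfrac{\pi}{4}\cos\dfrac x2-\dfrac14(\pi-x)-\displaystyle\sum_{j=1}^{(p-1)/2}\frac{\mathrm{Gl}_{2j+1}(x)}{2^{2j+1}}, & p\text{ odd},\end{cases}$$ with empty sums equal to $0$.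
   Context: For integers $n\ge1$ the Clausen functions are $\mathrm{Cl}_{2n}(x)=\sum_{k\ge1}\frac{\sin(kx)}{k^{2n}}$, $\mathrm{Cl}_{2n+1}(x)=\sum_{k\ge1}\frac{\cos(kx)}{k^{2n+1}}$, $\mathrm{Gl}_{2n}(x)=\sum_{k\ge1}\frac{\cos(kx)}{k^{2n}}$, $\mathrm{Gl}_{2n+1}(x)=\sum_{k\ge1}\frac{\sin(kx)}{k^{2n+1}}$; equivalently $\operatorname{Li}_{2n}(e^{ix})=\mathrm{Gl}_{2n}(x)+i\,\mathrm{Cl}_{2n}(x)$ and $\operatorname{Li}_{2n+1}(e^{ix})=\mathrm{Cl}_{2n+1}(x)+i\,\mathrm{Gl}_{2n+1}(x)$. *)

(* Defs.v *)
From Stdlib Require Import Reals.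
From Coquelicot Require Import Coquelicot.
Open Scope R_scope.

(* Series is indexed from 0, so the summand at index n is for k = n+1. *)
Definition Cl (m : nat) (x : R) : R :=
  if Nat.even m
  then Series (fun n => sin (INR (S n) * x) / INR (S n) ^ m)
  else Series (fun n => cos (INR (S n) * x) / INR (S n) ^ m).

Definition Gl (m : nat) (x : R) : R :=
  if Nat.even m
  then Series (fun n => cos (INR (S n) * x) / INR (S n) ^ m)
  else Series (fun n => sin (INR (S n) * x) / INR (S n) ^ m).

Definition den (p : nat) (n : nat) : R :=
  (2 * INR (S n) - 1) * (2 * INR (S n)) ^ p * (2 * INR (S n) + 1).

Definition fsum1 (q : nat) (f : nat -> R) : R := sum_n_m f 1 q.

(* Main.v *)
Require Import Defs.
From Stdlib Require Import Reals.
From Coquelicot Require Import Coquelicot.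
Open Scope R_scope.
From Stdlib Require Import Lra Lia Psatz.

Lemma lim_from_bound (a : nat -> R) (L K : R) :
  (forall N, Rabs (sum_n a N - L) <= K / INR (S N)) -> is_series a L.
Proof.
  intros H.
  change (is_lim_seq (sum_n a) L).
  apply is_lim_seq_spec. intro eps.
  assert (Hk : 0 < Rabs K + 1) by (pose proof (Rabs_pos K); lra).
  destruct (archimed_cor1 (eps / (Rabs K + 1))) as [N [HN HN0]].
  { apply Rdiv_lt_0_compat; [apply cond_pos|lra]. }
  exists N. intros n Hn.
  eapply Rle_lt_trans; [apply H|].
  assert (HNp : 0 < INR N) by (apply lt_0_INR; lia).
  assert (HSn : INR N <= INR (S n)) by (apply le_INR; lia).
  assert (Hi : / INR (S n) <= / INR N) by (apply Rinv_le_contravar; lra).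
  assert (Hip : 0 < / INR (S n)) by (apply Rinv_0_lt_compat; lra).
  unfold Rdiv.
  apply Rle_lt_trans with ((Rabs K + 1) * / INR N).
  - apply Rle_trans with ((Rabs K + 1) * / INR (S n)).
    + apply Rmult_le_compat_r; [lra|]. pose proof (Rle_abs K); lra.
    + apply Rmult_le_compat_l; lra.
  - apply Rmult_lt_reg_l with (/ (Rabs K + 1)). apply Rinv_0_lt_compat; lra.
    rewrite <- Rmult_assoc, Rinv_l by lra. rewrite Rmult_1_l.
    unfold Rdiv in HN. rewrite Rmult_comm. exact HN.
Qed.

Lemma RInt_pow01 (m : nat) : is_RInt (fun t => t ^ m) 0 1 (/ INR (S m)).
Proof.
  assert (HS : 0 < INR (S m)) by (apply lt_0_INR; lia).
  assert (H := is_RInt_derive (fun t => t ^ (S m) / INR (S m)) (fun t => t ^ m) 0 1).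
  replace (/ INR (S m)) with (minus (1 ^ (S m) / INR (S m)) (0 ^ (S m) / INR (S m))).
  - apply H.
    + intros t _. auto_derive; auto.
      change (match m with 0%nat => 1 | S _ => INR m + 1 end) with (INR (S m)). field. lra.
    + intros t _. apply (ex_derive_continuous (fun t => t ^ m)). auto_derive. auto.
  - rewrite pow1, pow_i by lia. unfold minus, plus, opp. simpl.
    change (match m with 0%nat => 1 | S _ => INR m + 1 end) with (INR (S m)). field. lra.
Qed.

Lemma RInt_Kpow01 (K : R) (m : nat) : is_RInt (fun t => K * t ^ m) 0 1 (K / INR (S m)).
Proof.
  apply (is_RInt_scal (fun t => t ^ m) 0 1 K) , RInt_pow01.
Qed.

Lemma main_gen (a : nat -> R) (g : nat -> R -> R) (h : R -> R) (L K : R) :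
  (forall n, is_RInt (g n) 0 1 (a n)) ->
  is_RInt h 0 1 L ->
  (forall N t, 0 <= t <= 1 -> Rabs (h t - sum_n (fun n => g n t) N) <= K * t^N) ->
  is_series a L.
Proof.
  intros Hg Hh Hb.
  apply lim_from_bound with K. intro N.
  assert (HS: is_RInt (fun t => sum_n (fun n => g n t) N) 0 1 (sum_n a N)).
  { induction N.
    - rewrite sum_O. eapply is_RInt_ext; [|apply Hg]. intros; rewrite sum_O; reflexivity.
    - rewrite sum_Sn. eapply is_RInt_ext; [|exact (is_RInt_plus _ _ _ _ _ _ IHN (Hg (S N)))].
      intros; rewrite sum_Sn; reflexivity. }
  set (e := fun y => h y - sum_n (fun n => g n y) N).
  assert (He : is_RInt e 0 1 (L - sum_n a N)) by exact (is_RInt_minus _ _ _ _ _ _ Hh HS).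
  assert (HK := RInt_Kpow01 K N).
  assert (HKm := RInt_Kpow01 (- K) N).
  assert (E1 : RInt e 0 1 = L - sum_n a N) by exact (is_RInt_unique (V:=R_CompleteNormedModule) _ _ _ _ He).
  assert (E2 := is_RInt_unique (V:=R_CompleteNormedModule) _ _ _ _ HK).
  assert (E3 := is_RInt_unique (V:=R_CompleteNormedModule) _ _ _ _ HKm).
  assert (X1 : RInt e 0 1 <= RInt (fun t => K * t ^ N) 0 1).
  { apply RInt_le; [lra| eexists; exact He | eexists; exact HK |].
    intros t Ht. specialize (Hb N t ltac:(lra)). unfold e.
    apply Rabs_le_between in Hb. lra. }
  assert (X2 : RInt (fun t => - K * t ^ N) 0 1 <= RInt e 0 1).
  { apply RInt_le; [lra| eexists; exact HKm | eexists; exact He |].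
    intros t Ht. specialize (Hb N t ltac:(lra)). unfold e.
    apply Rabs_le_between in Hb. lra. }
  rewrite E1, E2 in X1. rewrite E1, E3 in X2.
  apply Rabs_le. unfold Rdiv in *. lra.
Qed.


Lemma fin_cos (x u : R) (N : nat) :
  sum_n (fun k => u ^ k * cos (INR (S k) * x)) N * (1 - 2 * u * cos x + u ^ 2)
  = (cos x - u) - u ^ (S N) * (cos (INR (S (S N)) * x) - u * cos (INR (S N) * x)).
Proof.
  induction N.
  - rewrite sum_O. replace (INR (S (S 0)) * x) with (2 * x) by (simpl; ring).
    replace (INR 1 * x) with x by (simpl; ring).
    rewrite cos_2a_cos. simpl. ring.
  - rewrite sum_Sn. change (plus ?a ?b) with (a + b).
    rewrite Rmult_plus_distr_r, IHN.
    set (y := INR (S (S N)) * x).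
    replace (INR (S N) * x) with (y - x) by (unfold y; rewrite !S_INR; ring).
    replace (INR (S (S (S N))) * x) with (y + x) by (unfold y; rewrite !S_INR; ring).
    rewrite cos_plus, cos_minus. simpl. ring.
Qed.

Lemma fin_sin (x u : R) (N : nat) :
  sum_n (fun k => u ^ k * sin (INR (S k) * x)) N * (1 - 2 * u * cos x + u ^ 2)
  = sin x - u ^ (S N) * (sin (INR (S (S N)) * x) - u * sin (INR (S N) * x)).
Proof.
  induction N.
  - rewrite sum_O. replace (INR (S (S 0)) * x) with (2 * x) by (simpl; ring).
    replace (INR 1 * x) with x by (simpl; ring).
    rewrite sin_2a. simpl. ring.
  - rewrite sum_Sn. change (plus ?a ?b) with (a + b).
    rewrite Rmult_plus_distr_r, IHN.
    set (y := INR (S (S N)) * x).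
    replace (INR (S N) * x) with (y - x) by (unfold y; rewrite !S_INR; ring).
    replace (INR (S (S (S N))) * x) with (y + x) by (unfold y; rewrite !S_INR; ring).
    rewrite sin_plus, sin_minus. simpl. ring.
Qed.

Definition Dm (c t : R) := t ^ 2 - 2 * c * t + 1.
Definition Dp (c t : R) := t ^ 2 + 2 * c * t + 1.

Lemma Dm_ge (c s t : R) : c ^ 2 + s ^ 2 = 1 -> s ^ 2 <= Dm c t.
Proof. intros H. unfold Dm. pose proof (pow2_ge_0 (t - c)). nra. Qed.
Lemma Dp_ge (c s t : R) : c ^ 2 + s ^ 2 = 1 -> s ^ 2 <= Dp c t.
Proof. intros H. unfold Dp. pose proof (pow2_ge_0 (t + c)). nra. Qed.

Definition Fgen (c s al be ga de ep : R) (t : R) :=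
  al * t + be * atan ((t - c) / s) + ga * atan ((t + c) / s)
  + de * ln (Dm c t) + ep * ln (Dp c t).

Lemma Fgen_deriv (c s al be ga de ep t : R) : 0 < s -> c ^ 2 + s ^ 2 = 1 ->
  is_derive (Fgen c s al be ga de ep) t
    (al + (be * s + de * (2 * t - 2 * c)) / Dm c t + (ga * s + ep * (2 * t + 2 * c)) / Dp c t).
Proof.
  intros Hs Hcs.
  assert (H1 := Dm_ge c s t Hcs). assert (H2 := Dp_ge c s t Hcs).
  assert (Hs2 : 0 < s ^ 2) by nra.
  unfold Fgen. auto_derive.
  - unfold Dm, Dp in *. repeat split; try nra.
  - unfold Dm; auto_derive; auto.
  - unfold Dp; auto_derive; auto.
  - replace (Derive (fun x : R => Dm c x) t) with (2 * t - 2 * c)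
      by (symmetry; apply is_derive_unique; unfold Dm; auto_derive; [auto|ring]).
    replace (Derive (fun x : R => Dp c x) t) with (2 * t + 2 * c)
      by (symmetry; apply is_derive_unique; unfold Dp; auto_derive; [auto|ring]).
    replace (1 + (t + - c) * / s * ((t + - c) * / s * 1)) with (Dm c t / s ^ 2).
    2:{ transitivity (((t - c) ^ 2 + s ^ 2) / s ^ 2). unfold Dm. f_equal. nra. field. lra. }
    replace (1 + (t + c) * / s * ((t + c) * / s * 1)) with (Dp c t / s ^ 2).
    2:{ transitivity (((t + c) ^ 2 + s ^ 2) / s ^ 2). unfold Dp. f_equal. nra. field. lra. }
    assert (0 < Dm c t) by lra. assert (0 < Dp c t) by lra.
    field. repeat split; lra.
Qed.


Lemma hs x (hx0 : 0 < x) (hx1 : x < 2 * PI) : 0 < sin (x / 2).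
Proof. apply sin_gt_0; lra. Qed.
Lemma hcs x : cos (x / 2) ^ 2 + sin (x / 2) ^ 2 = 1.
Proof. pose proof (sin2_cos2 (x/2)). rewrite !Rsqr_pow2 in H. lra. Qed.
Lemma hC x : cos x = 2 * cos (x / 2) ^ 2 - 1.
Proof. replace x with (2 * (x / 2)) at 1 by field. rewrite cos_2a_cos. ring. Qed.
Lemma hS x : sin x = 2 * sin (x / 2) * cos (x / 2).
Proof. replace x with (2 * (x / 2)) at 1 by field. rewrite sin_2a. ring. Qed.
Lemma hc1 x (hx0 : 0 < x) (hx1 : x < 2 * PI) : -1 < cos (x / 2) < 1.
Proof. pose proof (hs x hx0 hx1). pose proof (hcs x). split; nra. Qed.

Lemma hsy x (hx0 : 0 < x) (hx1 : x < 2 * PI) : 0 < sin (x / 4).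
Proof. apply sin_gt_0; lra. Qed.
Lemma hcy x (hx0 : 0 < x) (hx1 : x < 2 * PI) : 0 < cos (x / 4).
Proof. apply cos_gt_0; lra. Qed.
Lemma c_y1 x : cos (x / 2) = 1 - 2 * sin (x / 4) * sin (x / 4).
Proof. replace (x / 2) with (2 * (x / 4)) by field. apply cos_2a_sin. Qed.
Lemma c_y2 x : cos (x / 2) = 2 * cos (x / 4) * cos (x / 4) - 1.
Proof. replace (x / 2) with (2 * (x / 4)) by field. apply cos_2a_cos. Qed.
Lemma s_y x : sin (x / 2) = 2 * sin (x / 4) * cos (x / 4).
Proof. replace (x / 2) with (2 * (x / 4)) by field. apply sin_2a. Qed.

Lemma tan_y x (hx0 : 0 < x) (hx1 : x < 2 * PI) :
  tan (x / 4) = (1 - cos (x / 2)) / sin (x / 2).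
Proof.
  pose proof (hsy x hx0 hx1); pose proof (hcy x hx0 hx1). unfold tan.
  rewrite c_y1, s_y. field. lra.
Qed.

Lemma Am1 x (hx0 : 0 < x) (hx1 : x < 2 * PI) :
  atan ((1 - cos (x / 2)) / sin (x / 2)) = x / 4.
Proof. rewrite <- (tan_y x hx0 hx1). apply atan_tan. split; lra. Qed.

Lemma Ap1 x (hx0 : 0 < x) (hx1 : x < 2 * PI) :
  atan ((1 + cos (x / 2)) / sin (x / 2)) = PI / 2 - x / 4.
Proof.
  replace ((1 + cos (x / 2)) / sin (x / 2)) with (tan (PI / 2 - x / 4)).
  - apply atan_tan. split; lra.
  - pose proof (hsy x hx0 hx1); pose proof (hcy x hx0 hx1).
    unfold tan. rewrite sin_shift, cos_shift.
    rewrite c_y2, s_y. field. lra.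
Qed.

Lemma Ap0 x (hx0 : 0 < x) (hx1 : x < 2 * PI) :
  atan ((0 + cos (x / 2)) / sin (x / 2)) = PI / 2 - x / 2.
Proof.
  replace ((0 + cos (x / 2)) / sin (x / 2)) with (tan (PI / 2 - x / 2)).
  - apply atan_tan. split; lra.
  - pose proof (hs x hx0 hx1). unfold tan. rewrite sin_shift, cos_shift. field. lra.
Qed.

Lemma Am0 x (hx0 : 0 < x) (hx1 : x < 2 * PI) :
  atan ((0 - cos (x / 2)) / sin (x / 2)) = x / 2 - PI / 2.
Proof.
  replace ((0 - cos (x / 2)) / sin (x / 2)) with (- ((0 + cos (x / 2)) / sin (x / 2)))
    by (pose proof (hs x hx0 hx1); field; lra).
  rewrite atan_opp, (Ap0 x hx0 hx1). ring.
Qed.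

Lemma L0m x : ln (Dm (cos (x / 2)) 0) = 0.
Proof. unfold Dm. replace (0 ^ 2 - 2 * cos (x / 2) * 0 + 1) with 1 by ring. apply ln_1. Qed.
Lemma L0p x : ln (Dp (cos (x / 2)) 0) = 0.
Proof. unfold Dp. replace (0 ^ 2 + 2 * cos (x / 2) * 0 + 1) with 1 by ring. apply ln_1. Qed.
Lemma L1m x (hx0 : 0 < x) (hx1 : x < 2 * PI) :
  ln (Dm (cos (x / 2)) 1) = ln 2 + ln (1 - cos (x / 2)).
Proof. pose proof (hc1 x hx0 hx1). unfold Dm.
  replace (1 ^ 2 - 2 * cos (x / 2) * 1 + 1) with (2 * (1 - cos (x / 2))) by ring.
  apply ln_mult; lra. Qed.
Lemma L1p x (hx0 : 0 < x) (hx1 : x < 2 * PI) :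
  ln (Dp (cos (x / 2)) 1) = ln 2 + ln (1 + cos (x / 2)).
Proof. pose proof (hc1 x hx0 hx1). unfold Dp.
  replace (1 ^ 2 + 2 * cos (x / 2) * 1 + 1) with (2 * (1 + cos (x / 2))) by ring.
  apply ln_mult; lra. Qed.
Lemma Lsum x (hx0 : 0 < x) (hx1 : x < 2 * PI) :
  ln (1 + cos (x / 2)) = 2 * ln (sin (x / 2)) - ln (1 - cos (x / 2)).
Proof.
  pose proof (hc1 x hx0 hx1). pose proof (hs x hx0 hx1). pose proof (hcs x).
  assert (ln ((1 + cos (x / 2)) * (1 - cos (x / 2))) = ln (sin (x / 2) * sin (x / 2))).
  { f_equal. nra. }
  rewrite !ln_mult in H2 by lra. lra.
Qed.
Lemma Ltan x (hx0 : 0 < x) (hx1 : x < 2 * PI) :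
  ln (tan (x / 4)) = ln (1 - cos (x / 2)) - ln (sin (x / 2)).
Proof. pose proof (hc1 x hx0 hx1). pose proof (hs x hx0 hx1). rewrite (tan_y x hx0 hx1). apply ln_div; lra. Qed.
Lemma L2s x (hx0 : 0 < x) (hx1 : x < 2 * PI) :
  ln (2 * sin (x / 2)) = ln 2 + ln (sin (x / 2)).
Proof. pose proof (hs x hx0 hx1). apply ln_mult; lra. Qed.


Lemma RInt_Fgen c s al be ga de ep : 0 < s -> c ^ 2 + s ^ 2 = 1 ->
  is_RInt (fun t => al + (be * s + de * (2 * t - 2 * c)) / Dm c t
                       + (ga * s + ep * (2 * t + 2 * c)) / Dp c t) 0 1
    (Fgen c s al be ga de ep 1 - Fgen c s al be ga de ep 0).
Proof.
  intros Hs Hcs.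
  apply (is_RInt_derive (Fgen c s al be ga de ep)).
  - intros t _. apply Fgen_deriv; auto.
  - intros t _.
    assert (H1 := Dm_ge c s t Hcs). assert (H2 := Dp_ge c s t Hcs).
    assert (Hs2 : 0 < s ^ 2) by nra.
    apply (ex_derive_continuous (fun t => al + (be * s + de * (2 * t - 2 * c)) / Dm c t
                       + (ga * s + ep * (2 * t + 2 * c)) / Dp c t)).
    unfold Dm, Dp in *. auto_derive. split; lra.
Qed.

Lemma RInt_poly3 (A B E : R) (m1 m2 m3 : nat) :
  is_RInt (fun t => A * t ^ m1 + B * t ^ m2 + E * t ^ m3) 0 1
    (A / INR (S m1) + B / INR (S m2) + E / INR (S m3)).
Proof.
  exact (is_RInt_plus _ _ _ _ _ _
           (is_RInt_plus _ _ _ _ _ _ (RInt_Kpow01 A m1) (RInt_Kpow01 B m2))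
           (RInt_Kpow01 E m3)).
Qed.

Lemma pow_bound t N : 0 <= t <= 1 -> 0 <= (t ^ 2) ^ (S N) <= t ^ N.
Proof.
  intros Ht. rewrite <- pow_mult.
  replace (2 * S N)%nat with (N + (N + 2))%nat by lia.
  rewrite pow_add.
  assert (0 <= t ^ N) by (apply pow_le; lra).
  assert (0 <= t ^ (N + 2)) by (apply pow_le; lra).
  assert (t ^ (N + 2) <= 1) by (rewrite <- (pow1 (N + 2)); apply pow_incr; lra).
  split; nra.
Qed.

Lemma sum_scal_l (a : R) (f : nat -> R) (N : nat) :
  sum_n (fun n => a * f n) N = a * sum_n f N.
Proof.
  induction N.
  - rewrite !sum_O. reflexivity.
  - rewrite !sum_Sn, IHN. change (plus ?x ?y) with (x + y). symmetry; apply Rmult_plus_distr_l.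
Qed.

Lemma case_gen (x s : R) (q trig P : R -> R) (a : nat -> R) (L : R) :
  0 < s ->
  (forall u N, sum_n (fun k => u ^ k * trig (INR (S k) * x)) N * (1 - 2 * u * cos x + u ^ 2)
     = P u - u ^ (S N) * (trig (INR (S (S N)) * x) - u * trig (INR (S N) * x))) ->
  (forall z, Rabs (trig z) <= 1) ->
  (forall t, 0 <= t <= 1 -> Rabs (q t) <= 1) ->
  (forall t, s ^ 4 <= 1 - 2 * t ^ 2 * cos x + (t ^ 2) ^ 2) ->
  (forall n, is_RInt (fun t => q t * ((t ^ 2) ^ n * trig (INR (S n) * x))) 0 1 (a n)) ->
  is_RInt (fun t => q t * (P (t ^ 2) / (1 - 2 * t ^ 2 * cos x + (t ^ 2) ^ 2))) 0 1 L ->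
  is_series a L.
Proof.
  intros Hs Hfin Htr Hq HD Hg Hh.
  apply (main_gen a _ _ L (2 / s ^ 4) Hg Hh).
  intros N t Ht.
  rewrite sum_scal_l.
  set (u := t ^ 2).
  assert (HD' : s ^ 4 <= 1 - 2 * u * cos x + u ^ 2) by (apply HD).
  set (D := 1 - 2 * u * cos x + u ^ 2) in *.
  assert (Hs4 : 0 < s ^ 4) by (apply pow_lt; lra).
  assert (HDp : 0 < D) by lra.
  set (B := trig (INR (S (S N)) * x) - u * trig (INR (S N) * x)).
  set (w := u ^ (S N)).
  assert (Hsum : @eq R (sum_n (fun k => u ^ k * trig (INR (S k) * x)) N) ((P u - w * B) / D)).
  { apply (Rmult_eq_reg_r D); [| lra]. unfold D at 1. rewrite Hfin. fold B w. unfold Rdiv. rewrite Rmult_assoc, Rinv_l by lra. ring. }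
  rewrite Hsum.
  replace (q t * (P u / D) - q t * ((P u - w * B) / D)) with (q t * (w * B) / D)
    by (field; lra).
  assert (Hw : 0 <= w <= t ^ N) by (apply pow_bound; auto).
  assert (Hu : 0 <= u <= 1) by (unfold u; split; nra).
  assert (HB : Rabs B <= 2).
  { unfold B. eapply Rle_trans; [apply Rabs_triang|]. rewrite Rabs_Ropp, Rabs_mult.
    pose proof (Htr (INR (S (S N)) * x)). pose proof (Htr (INR (S N) * x)).
    rewrite (Rabs_right u) by lra. nra. }
  pose proof (Hq t Ht) as Hqt.
  rewrite Rabs_div by lra. rewrite (Rabs_right D) by lra.
  rewrite !Rabs_mult, (Rabs_right w) by lra.
  set (X := Rabs (q t) * (w * Rabs B)).
  assert (HX : 0 <= X <= 2 * t ^ N).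
  { unfold X. pose proof (Rabs_pos (q t)). pose proof (Rabs_pos B). split.
    - apply Rmult_le_pos; [lra|]. apply Rmult_le_pos; lra.
    - assert (w * Rabs B <= t ^ N * 2) by (apply Rmult_le_compat; lra).
      assert (0 <= w * Rabs B) by (apply Rmult_le_pos; lra). nra. }
  unfold Rdiv. apply Rle_trans with (X * / s ^ 4).
  - apply Rmult_le_compat_l; [lra|]. apply Rinv_le_contravar; lra.
  - assert (0 < / s ^ 4) by (apply Rinv_0_lt_compat; lra). nra.
Qed.


Lemma ext_val (f g : R -> R) (l l' : R) :
  is_RInt f 0 1 l -> (forall t, f t = g t) -> l = l' -> is_RInt g 0 1 l'.
Proof.
  intros H He Hl. subst l'. eapply is_RInt_ext; [|exact H]. intros; apply He.
Qed.

Lemma HD_lemma (x : R) : 0 < x -> x < 2 * PI -> forall t,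
  sin (x/2) ^ 4 <= 1 - 2 * t ^ 2 * cos x + (t ^ 2) ^ 2.
Proof.
  intros h0 h1 t.
  pose proof (hs x h0 h1). pose proof (hcs x).
  assert (E : 1 - 2 * t ^ 2 * cos x + (t ^ 2) ^ 2 = Dm (cos (x/2)) t * Dp (cos (x/2)) t)
    by (rewrite (hC x); unfold Dm, Dp; ring).
  rewrite E.
  pose proof (Dm_ge (cos (x/2)) (sin (x/2)) t H0).
  pose proof (Dp_ge (cos (x/2)) (sin (x/2)) t H0).
  replace (sin (x/2) ^ 4) with (sin (x/2) ^ 2 * sin (x/2) ^ 2) by ring.
  apply Rmult_le_compat; try nra.
Qed.

Lemma Rabs_trig_cos z : Rabs (cos z) <= 1.
Proof. apply Rabs_le. apply COS_bound. Qed.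
Lemma Rabs_trig_sin z : Rabs (sin z) <= 1.
Proof. apply Rabs_le. apply SIN_bound. Qed.

Lemma q0_bound t : 0 <= t <= 1 -> Rabs ((1 - t ^ 2) / 2) <= 1.
Proof. intros. apply Rabs_le. split; nra. Qed.
Lemma q1_bound t : 0 <= t <= 1 -> Rabs ((1 - t) ^ 2 / 2) <= 1.
Proof. intros. apply Rabs_le. split; nra. Qed.

Lemma coef0 (T : R) (n : nat) :
  is_RInt (fun t => (1 - t ^ 2) / 2 * ((t ^ 2) ^ n * T)) 0 1 (T / den 0 n).
Proof.
  eapply ext_val; [apply (RInt_poly3 (T/2) (-T/2) 0 (2*n) (2*n+2) 0)| |].
  - intro t. rewrite <- pow_mult, pow_add. simpl. field.
  - unfold den. rewrite !S_INR, !plus_INR, !mult_INR. simpl.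
    pose proof (pos_INR n). field. repeat split; try lra.
Qed.

Lemma coef1 (T : R) (n : nat) :
  is_RInt (fun t => (1 - t) ^ 2 / 2 * ((t ^ 2) ^ n * T)) 0 1 (T / den 1 n).
Proof.
  eapply ext_val; [apply (RInt_poly3 (T/2) (-T) (T/2) (2*n) (2*n+1) (2*n+2))| |].
  - intro t. rewrite <- pow_mult, !pow_add. simpl. field.
  - unfold den. rewrite !S_INR, !plus_INR, !mult_INR. simpl.
    pose proof (pos_INR n). field. repeat split; try lra.
Qed.

Lemma case_c0 x : 0 < x -> x < 2 * PI ->
  is_series (fun n => cos (INR (S n) * x) / den 0 n) (1/2 - PI/4 * sin (x/2)).
Proof.
  intros h0 h1.
  pose proof (hs x h0 h1) as Hs. pose proof (hcs x) as Hcs. pose proof (hc1 x h0 h1) as Hc.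
  apply (case_gen x (sin (x/2)) (fun t => (1 - t ^ 2) / 2) cos (fun u => cos x - u)).
  - exact Hs.
  - intros; apply fin_cos.
  - apply Rabs_trig_cos.
  - apply q0_bound.
  - apply HD_lemma; auto.
  - intro n. apply coef0.
  - set (be := - (1 - cos (x/2) ^ 2) / (2 * sin (x/2))).
    eapply ext_val; [apply (RInt_Fgen (cos (x/2)) (sin (x/2)) (1/2) be be 0 0 Hs Hcs)| |].
    + intro t. cbv beta.
      pose proof (Dm_ge (cos (x/2)) (sin (x/2)) t Hcs).
      pose proof (Dp_ge (cos (x/2)) (sin (x/2)) t Hcs).
      assert (0 < Dm (cos (x/2)) t) by nra. assert (0 < Dp (cos (x/2)) t) by nra.
      assert (ED : 1 - 2 * t ^ 2 * cos x + (t ^ 2) ^ 2 = Dm (cos (x/2)) t * Dp (cos (x/2)) t)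
        by (rewrite (hC x); unfold Dm, Dp; ring).
      rewrite ED. rewrite (hC x). unfold be. unfold Dm, Dp in *. field. repeat split; lra.
    + unfold Fgen, be.
      rewrite (Am1 x h0 h1), (Ap1 x h0 h1), (Am0 x h0 h1), (Ap0 x h0 h1).
      replace (1 - cos (x/2) ^ 2) with (sin (x/2) ^ 2) by lra.
      field. lra.
Qed.

Ltac ptwise x Hcs :=
  let t := fresh "t" in
  intro t; cbv beta;
  pose proof (Dm_ge (cos (x/2)) (sin (x/2)) t Hcs);
  pose proof (Dp_ge (cos (x/2)) (sin (x/2)) t Hcs);
  assert (0 < Dm (cos (x/2)) t) by nra; assert (0 < Dp (cos (x/2)) t) by nra;
  let ED := fresh "ED" in
  assert (ED : 1 - 2 * t ^ 2 * cos x + (t ^ 2) ^ 2 = Dm (cos (x/2)) t * Dp (cos (x/2)) t)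
    by (rewrite (hC x); unfold Dm, Dp; ring);
  rewrite ED; try rewrite (hC x); try rewrite (hS x); unfold Dm, Dp in *;
  field; repeat split; lra.

Lemma case_s0 x : 0 < x -> x < 2 * PI ->
  is_series (fun n => sin (INR (S n) * x) / den 0 n)
    (- (1/2) * sin (x/2) * ln (tan (x/4))).
Proof.
  intros h0 h1.
  pose proof (hs x h0 h1) as Hs. pose proof (hcs x) as Hcs. pose proof (hc1 x h0 h1) as Hc.
  apply (case_gen x (sin (x/2)) (fun t => (1 - t ^ 2) / 2) sin (fun u => sin x)).
  - exact Hs.
  - intros; apply fin_sin.
  - apply Rabs_trig_sin.
  - apply q0_bound.
  - apply HD_lemma; auto.
  - intro n. apply coef0.
  - eapply ext_val; [apply (RInt_Fgen (cos (x/2)) (sin (x/2)) 0 0 0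
                              (- sin (x/2) / 4) (sin (x/2) / 4) Hs Hcs)| |].
    + ptwise x Hcs.
    + unfold Fgen.
      rewrite (L1m x h0 h1), (L1p x h0 h1), (L0m x), (L0p x), (Lsum x h0 h1), (Ltan x h0 h1).
      field.
Qed.

Lemma case_c1 x : 0 < x -> x < 2 * PI ->
  is_series (fun n => cos (INR (S n) * x) / den 1 n)
    (- (1/2) - 1/2 * cos (x/2) * ln (tan (x/4)) + 1/2 * ln (2 * sin (x/2))).
Proof.
  intros h0 h1.
  pose proof (hs x h0 h1) as Hs. pose proof (hcs x) as Hcs. pose proof (hc1 x h0 h1) as Hc.
  apply (case_gen x (sin (x/2)) (fun t => (1 - t) ^ 2 / 2) cos (fun u => cos x - u)).
  - exact Hs.
  - intros; apply fin_cos.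
  - apply Rabs_trig_cos.
  - apply q1_bound.
  - apply HD_lemma; auto.
  - intro n. apply coef1.
  - eapply ext_val; [apply (RInt_Fgen (cos (x/2)) (sin (x/2)) (-1/2) 0 0
                              ((1 - cos (x/2)) / 4) ((1 + cos (x/2)) / 4) Hs Hcs)| |].
    + ptwise x Hcs.
    + unfold Fgen.
      rewrite (L1m x h0 h1), (L1p x h0 h1), (L0m x), (L0p x), (Lsum x h0 h1), (Ltan x h0 h1),
        (L2s x h0 h1).
      field.
Qed.

Lemma case_s1 x : 0 < x -> x < 2 * PI ->
  is_series (fun n => sin (INR (S n) * x) / den 1 n)
    (PI/4 * cos (x/2) - 1/4 * (PI - x)).
Proof.
  intros h0 h1.
  pose proof (hs x h0 h1) as Hs. pose proof (hcs x) as Hcs. pose proof (hc1 x h0 h1) as Hc.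
  apply (case_gen x (sin (x/2)) (fun t => (1 - t) ^ 2 / 2) sin (fun u => sin x)).
  - exact Hs.
  - intros; apply fin_sin.
  - apply Rabs_trig_sin.
  - apply q1_bound.
  - apply HD_lemma; auto.
  - intro n. apply coef1.
  - eapply ext_val; [apply (RInt_Fgen (cos (x/2)) (sin (x/2)) 0
                              ((cos (x/2) - 1) / 2) ((cos (x/2) + 1) / 2) 0 0 Hs Hcs)| |].
    + ptwise x Hcs.
    + unfold Fgen.
      rewrite (Am1 x h0 h1), (Ap1 x h0 h1), (Am0 x h0 h1), (Ap0 x h0 h1).
      field.
Qed.


Lemma tele_series : is_series (fun n => / INR (S n) - / INR (S (S n))) 1.
Proof.
  apply lim_from_bound with 1. intro N.
  assert (Hs : @eq R (sum_n (fun n => / INR (S n) - / INR (S (S n))) N) (1 - / INR (S (S N)))).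
  { induction N.
    - rewrite sum_O. simpl. field.
    - rewrite sum_Sn. change (plus ?a ?b) with (a + b). rewrite IHN. lra. }
  rewrite Hs.
  assert (H1 : 0 < INR (S N)) by (apply lt_0_INR; lia).
  assert (H2 : INR (S N) <= INR (S (S N))) by (apply le_INR; lia).
  replace (1 - / INR (S (S N)) - 1) with (- / INR (S (S N))) by ring.
  rewrite Rabs_Ropp, Rabs_right.
  - unfold Rdiv. rewrite Rmult_1_l. apply Rinv_le_contravar; lra.
  - left. apply Rinv_0_lt_compat. lra.
Qed.

Lemma ex_series_pow (trig : R -> R) (x : R) (m : nat) :
  (2 <= m)%nat -> (forall z, Rabs (trig z) <= 1) ->
  ex_series (fun n => trig (INR (S n) * x) / INR (S n) ^ m).
Proof.
  intros Hm Ht.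
  apply (ex_series_le (V:=R_CompleteNormedModule) _ (fun n => 2 * (/ INR (S n) - / INR (S (S n))))).

  - intro n. change (norm ?a) with (Rabs a).
    set (k := INR (S n)).
    assert (Hk : 1 <= k) by (unfold k; rewrite S_INR; pose proof (pos_INR n); lra).
    replace (INR (S (S n))) with (k + 1) by (unfold k; rewrite (S_INR (S n)); ring).
    assert (Hkm : k ^ 2 <= k ^ m) by (apply Rle_pow; auto).
    assert (Hk2 : 0 < k ^ 2) by nra.
    rewrite Rabs_div by (apply pow_nonzero; lra).
    rewrite (Rabs_right (k ^ m)) by lra.
    pose proof (Ht (k * x)).
    apply Rle_trans with (1 / k ^ 2).
    + unfold Rdiv. apply Rmult_le_compat; try lra.
      * apply Rabs_pos.
      * left; apply Rinv_0_lt_compat; lra.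
      * apply Rinv_le_contravar; lra.
    + replace (2 * (/ k - / (k + 1))) with (2 / (k * (k + 1))) by (field; lra).
      apply Rmult_le_reg_r with (k ^ 2 * (k * (k + 1))). nra.
      unfold Rdiv. field_simplify; try lra. nra.
  - exists (scal 2 1). apply (is_series_scal 2 _ _ tele_series).
Qed.

Lemma step_gen (trig : R -> R) (p : nat) (x L : R) :
  (forall z, Rabs (trig z) <= 1) ->
  is_series (fun n => trig (INR (S n) * x) / den p n) L ->
  is_series (fun n => trig (INR (S n) * x) / den (S (S p)) n)
    (L - Series (fun n => trig (INR (S n) * x) / INR (S n) ^ (S (S p))) / 2 ^ (S (S p))).
Proof.
  intros Ht H.
  assert (H2 := Series_correct _ (ex_series_pow trig x (S (S p)) ltac:(lia) Ht)).
  set (Sv := Series (fun n => trig (INR (S n) * x) / INR (S n) ^ (S (S p)))) in *.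
  assert (H3 : is_series (fun n => trig (INR (S n) * x) / den p n
                 + - (/ 2 ^ (S (S p)) * (trig (INR (S n) * x) / INR (S n) ^ (S (S p)))))
                 (L + - (/ 2 ^ (S (S p)) * Sv)))
    by exact (is_series_minus _ _ _ _ H (is_series_scal (/ 2 ^ (S (S p))) _ _ H2)).
  replace (L - Sv / 2 ^ (S (S p))) with (L + - (/ 2 ^ (S (S p)) * Sv))
    by (unfold Rdiv; rewrite Rmult_comm; ring).
  eapply is_series_ext; [|exact H3].
  intro n. cbv beta.
  unfold den.
  set (k := INR (S n)).
  assert (Hk : 1 <= k) by (unfold k; rewrite S_INR; pose proof (pos_INR n); lra).
  rewrite Rpow_mult_distr.
  assert (0 < k ^ p) by (apply pow_lt; lra).
  assert (0 < 2 ^ p) by (apply pow_lt; lra).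
  simpl. rewrite !Rpow_mult_distr. match goal with |- ?a = ?b => change (@eq R a b) end. field. repeat split; try lra.
Qed.

Lemma even_facts m : Nat.even (2 * m) = true /\ Nat.even (2 * m + 1) = false.
Proof.
  induction m.
  - split; reflexivity.
  - replace (2 * S m)%nat with (S (S (2 * m))) by lia.
    replace (S (S (2 * m)) + 1)%nat with (S (S (2 * m + 1))) by lia.
    exact IHm.
Qed.

Lemma fsum1_S q f : fsum1 (S q) f = fsum1 q f + f (S q).
Proof. unfold fsum1. rewrite sum_n_Sm by lia. reflexivity. Qed.
Lemma fsum1_0 f : fsum1 0 f = 0.
Proof. unfold fsum1. exact (sum_n_m_zero (G:=R_AbelianMonoid) f 1 0 ltac:(lia)). Qed.

Lemma reassoc (a b c : R) : a - (b + c) = a - b - c.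
Proof. ring. Qed.

Lemma even_case x (h0 : 0 < x) (h1 : x < 2 * PI) m :
  is_series (fun n => cos (INR (S n) * x) / den (2 * m) n)
    (1/2 - PI/4 * sin (x/2) - fsum1 m (fun j => Gl (2*j) x / 2 ^ (2*j)))
  /\
  is_series (fun n => sin (INR (S n) * x) / den (2 * m) n)
    (- (1/2) * sin (x/2) * ln (tan (x/4)) - fsum1 m (fun j => Cl (2*j) x / 2 ^ (2*j))).
Proof.
  induction m.
  - rewrite !fsum1_0, !Rminus_0_r. split; [apply case_c0|apply case_s0]; auto.
  - destruct IHm as [Hc Hs].
    rewrite !fsum1_S, !reassoc. cbv beta.
    replace (2 * S m)%nat with (S (S (2 * m))) by lia.
    unfold Gl, Cl.
    change (Nat.even (S (S (2 * m)))) with (Nat.even (2 * m)).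
    rewrite (proj1 (even_facts m)).
    split; apply step_gen; auto; [apply Rabs_trig_cos|apply Rabs_trig_sin].
Qed.

Lemma odd_case x (h0 : 0 < x) (h1 : x < 2 * PI) m :
  is_series (fun n => cos (INR (S n) * x) / den (2 * m + 1) n)
    (- (1/2) - 1/2 * cos (x/2) * ln (tan (x/4)) + 1/2 * ln (2 * sin (x/2))
          - fsum1 m (fun j => Cl (2*j+1) x / 2 ^ (2*j+1)))
  /\
  is_series (fun n => sin (INR (S n) * x) / den (2 * m + 1) n)
    (PI/4 * cos (x/2) - 1/4 * (PI - x)
          - fsum1 m (fun j => Gl (2*j+1) x / 2 ^ (2*j+1))).
Proof.
  induction m.
  - rewrite !fsum1_0, !Rminus_0_r. split; [apply case_c1|apply case_s1]; auto.
  - destruct IHm as [Hc Hs].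
    rewrite !fsum1_S, !reassoc. cbv beta.
    replace (2 * S m + 1)%nat with (S (S (2 * m + 1))) by lia.
    unfold Gl, Cl.
    change (Nat.even (S (S (2 * m + 1)))) with (Nat.even (2 * m + 1)).
    rewrite (proj2 (even_facts m)).
    split; apply step_gen; auto; [apply Rabs_trig_cos|apply Rabs_trig_sin].
Qed.

Theorem corollary6 (p : nat) (x : R) (hx0 : 0 < x) (hx1 : x < 2 * PI) :
  is_series (fun n => cos (INR (S n) * x) / den p n)
    (if Nat.even p
     then 1/2 - PI/4 * sin (x/2)
          - fsum1 (p / 2) (fun j => Gl (2*j) x / 2 ^ (2*j))
     else - (1/2) - 1/2 * cos (x/2) * ln (tan (x/4)) + 1/2 * ln (2 * sin (x/2))
          - fsum1 ((p - 1) / 2) (fun j => Cl (2*j+1) x / 2 ^ (2*j+1)))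
  /\
  is_series (fun n => sin (INR (S n) * x) / den p n)
    (if Nat.even p
     then - (1/2) * sin (x/2) * ln (tan (x/4))
          - fsum1 (p / 2) (fun j => Cl (2*j) x / 2 ^ (2*j))
     else PI/4 * cos (x/2) - 1/4 * (PI - x)
          - fsum1 ((p - 1) / 2) (fun j => Gl (2*j+1) x / 2 ^ (2*j+1))).
Proof.
  destruct (Nat.Even_or_Odd p) as [[m Hm]|[m Hm]]; subst p.
  - rewrite (proj1 (even_facts m)).
    replace ((2 * m) / 2)%nat with m
      by (symmetry; rewrite Nat.mul_comm; apply Nat.div_mul; lia).
    apply even_case; auto.
  - rewrite (proj2 (even_facts m)).
    replace ((2 * m + 1 - 1) / 2)%nat with m
      by (symmetry; replace (2 * m + 1 - 1)%nat with (m * 2)%nat by lia; apply Nat.div_mul; lia).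
    apply odd_case; auto.
Qed.
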